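(* Let $(X,Y)$ be a pair of real-valued random variables, and assume there exist disjoint intervals $G$ and $H$ and Borel sets $G'\subseteq G$, $H'\subseteq H$ such that the events $\{X\in G'\}$ and $\{Y\in H'\}$ are almost surely equal and $P(X\in G')>0$. Then there is no integrable random variable $Z$ with $X=E(Z\mid X)$ and $Y=E(Z\mid Y)$. In particular, if $(X,Y)$ takes values in $[0,1]^2$ and satisfies this condition, then $(X,Y)$ is not coherent.
   Context: A pair $(X,Y)$ of random variables with values in $[0,1]$ is coherent if there is an event $A$ with $X=P(A\mid X)$ and $Y=P(A\mid Y)$ (equivalently $X=P(A\mid\mathcal G)$, $Y=P(A\mid\mathcal H)$ for some sub-$\sigma$-fields $\mathcal G,\mathcal H$). *)

(* Defs.v *)
From HB Require Import structures.
From mathcomp Require Import all_boot all_order all_algebra.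
From mathcomp Require Import all_classical all_reals all_analysis.
Set Implicit Arguments. Unset Strict Implicit. Unset Printing Implicit Defensive.
Import Order.TTheory GRing.Theory Num.Theory.
Local Open Scope classical_set_scope.
Local Open Scope ring_scope.

(* Conditional expectation is not in the library.  [is_condexp_self P Z W]
   expresses "W = E(Z | W)" (i.e. W is a version of the conditional
   expectation of Z given sigma(W)): W is integrable and, for every Borel
   set B of R, the integrals of W and of Z over the event {W \in B} agree.
   (sigma(W)-measurability of W is automatic once W is measurable.) *)
Definition is_condexp_self (d : measure_display) (T : measurableType d)
  (R : realType) (P : probability T R) (Z W : T -> R) : Prop :=
  P.-integrable setT (EFin \o W) /\
  forall B : set R, measurable B ->
    (\int[P]_(x in W @^-1` B) (W x)%:E = \int[P]_(x in W @^-1` B) (Z x)%:E)%E.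

Definition coherent (d : measure_display) (T : measurableType d)
  (R : realType) (P : probability T R) (X Y : T -> R) : Prop :=
  exists A : set T, measurable A /\
    is_condexp_self P (\1_A) X /\ is_condexp_self P (\1_A) Y.

(* Main.v *)
Require Import Defs.
From HB Require Import structures.
From mathcomp Require Import all_boot all_order all_algebra.
From mathcomp Require Import all_classical all_reals all_analysis.
From mathcomp Require Import measurable_realfun.
Import Order.TTheory GRing.Theory Num.Theory.
Local Open Scope classical_set_scope.
Local Open Scope ring_scope.

Lemma key_zero (d : measure_display) (T : measurableType d)
  (R : realType) (mu : {measure set T -> \bar R}) (C : set T) (U V : T -> R) :
  measurable C ->
  mu.-integrable C (EFin \o U) -> mu.-integrable C (EFin \o V) ->
  (\int[mu]_(x in C) (U x)%:E = \int[mu]_(x in C) (V x)%:E)%E ->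
  (forall x, C x -> U x < V x) -> mu C = 0%E.
Proof.
Local Open Scope ereal_scope.
move=> mC iU iV eqUV ltUV.
have mf : measurable_fun C (fun x => (V x)%:E - (U x)%:E).
  apply: emeasurable_funB; [exact: measurable_int iV|exact: measurable_int iU].
have i0 : (\int[mu]_(x in C) `|(fun x => (V x)%:E - (U x)%:E) x| = 0)%E.
  rewrite (eq_integral (fun x => (V x)%:E - (U x)%:E)); last first.
    by move=> x /[!inE] Cx; rewrite gee0_abs // -EFinB lee_fin subr_ge0 ltW // ltUV.
  rewrite integralB // eqUV subee //; exact: integrable_fin_num.
have /(ae_eq_integral_abs mu mC mf) := i0.
case=> N [mN N0 sN].
apply/eqP; rewrite -measure_le0 -N0 le_measure ?inE //.
move=> x Cx; apply: sN => /= /(_ Cx); rewrite -EFinB => -[] /eqP.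
rewrite subr_eq0 => /eqP eq.
by have := ltUV x Cx; rewrite eq ltxx.
Qed.

Local Close Scope ereal_scope.

Lemma itv_order1 (R : realType) (G H : interval R) (g0 h0 : R) :
  [set` G] `&` [set` H] = set0 -> g0 \in G -> h0 \in H -> g0 < h0 ->
  forall x y, x \in G -> y \in H -> x < y.
Proof.
move=> D g0G h0H lt0 x y xG yH; rewrite ltNge; apply/negP => yx.
have [hx|xh] := leP h0 x.
  have : ([set` G] `&` [set` H]) h0.
    split => //=; apply: (@interval_is_interval _ _ g0 x) => //.
    by rewrite hx ltW.
  by rewrite D.
have : ([set` G] `&` [set` H]) x.
  split => //=; apply: (@interval_is_interval _ _ y h0) => //.
  by rewrite yx ltW.
by rewrite D.
Qed.

Lemma itv_order (R : realType) (G H : interval R) (g0 h0 : R) :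
  [set` G] `&` [set` H] = set0 -> g0 \in G -> h0 \in H ->
  (forall x y, x \in G -> y \in H -> x < y) \/
  (forall x y, x \in G -> y \in H -> y < x).
Proof.
move=> D g0G h0H.
have [lt|ge] := ltP g0 h0.
  by left; exact: (itv_order1 _ _ _ _ _ D g0G h0H lt).
have ne : g0 != h0.
  apply/eqP => e; have : ([set` G] `&` [set` H]) g0 by split => //=; rewrite e.
  by rewrite D.
right => x y xG yH.
have D' : [set` H] `&` [set` G] = set0 by rewrite setIC.
apply: (itv_order1 _ _ _ _ _ D' h0H g0G _ _ _ yH xG).
by rewrite lt_neqAle ge eq_sym ne.
Qed.

Arguments key_zero {d T R mu C U V}.
Arguments itv_order {R G H g0 h0}.

Theorem proposition2p1 (d : measure_display) (T : measurableType d)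
  (R : realType) (P : probability T R) (X Y : T -> R)
  (mX : measurable_fun setT X) (mY : measurable_fun setT Y)
  (G H : interval R) (G' H' : set R) :
  [set` G] `&` [set` H] = set0 ->
  measurable G' -> measurable H' ->
  G' `<=` [set` G] -> H' `<=` [set` H] ->
  P ((X @^-1` G' `\` Y @^-1` H') `|` (Y @^-1` H' `\` X @^-1` G')) = 0%E ->
  (0 < P (X @^-1` G'))%E ->
  (~ exists Z : T -> R, P.-integrable setT (EFin \o Z) /\
       is_condexp_self P Z X /\ is_condexp_self P Z Y) /\
  ((forall t, 0 <= X t <= 1 /\ 0 <= Y t <= 1) -> ~ coherent P X Y).
Proof.
move=> D mG' mH' sG sH N0 PA.
set A := X @^-1` G'; set B := Y @^-1` H'.
have mA : measurable A by rewrite /A -[X @^-1` _]setTI; exact: mX.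
have mB : measurable B by rewrite /B -[Y @^-1` _]setTI; exact: mY.
have mC : measurable (A `&` B) by exact: measurableI.
have N1 : P (A `\` B) = 0%E.
  apply/eqP; rewrite -measure_le0 -N0 le_measure ?inE //.
  all: try by move=> x ?; left.
  all: try exact: measurableD.
  all: try exact (measurableU _ _ (measurableD mA mB) (measurableD mB mA)).
have N2 : P (B `\` A) = 0%E.
  apply/eqP; rewrite -measure_le0 -N0 le_measure ?inE //.
  all: try by move=> x ?; right.
  all: try exact: measurableD.
  all: try exact (measurableU _ _ (measurableD mA mB) (measurableD mB mA)).
have eA : forall f : T -> R, P.-integrable setT (EFin \o f) ->
    (\int[P]_(x in A) (f x)%:E = \int[P]_(x in A `&` B) (f x)%:E)%E.
  move=> f iF; rewrite (negligible_integral (N:=A `\` B)) ?setDD //.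
  - exact: measurableD.
  - exact: integrableS iF.
have eB : forall f : T -> R, P.-integrable setT (EFin \o f) ->
    (\int[P]_(x in B) (f x)%:E = \int[P]_(x in A `&` B) (f x)%:E)%E.
  move=> f iF; rewrite (negligible_integral (N:=B `\` A)) ?setDD 1?setIC //.
  - exact: measurableD.
  - exact: integrableS iF.
have PC : (0 < P (A `&` B))%E.
  have e : P A = (P (A `\` B) + P (A `&` B))%E := measureDI P mA mB.
  by move: PA; rewrite -/A e N1 add0e.
have [x0 [Ax0 Bx0]] : (A `&` B) !=set0.
  apply/set0P; apply/eqP => C0; move: PC; rewrite C0 measure0 ltxx.
  by [].
have part1 : ~ exists Z : T -> R, P.-integrable setT (EFin \o Z) /\
       is_condexp_self P Z X /\ is_condexp_self P Z Y.
  move=> [Z [iZ [[iX cX] [iY cY]]]].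
  have eq : (\int[P]_(x in A `&` B) (X x)%:E = \int[P]_(x in A `&` B) (Y x)%:E)%E.
    rewrite -eA // -[LHS]/(\int[P]_(x in X @^-1` G') (X x)%:E)%E cX // eA //.
    rewrite -eB // -[LHS]/(\int[P]_(x in Y @^-1` H') (Z x)%:E)%E -cY // eB //.
  have iXC : P.-integrable (A `&` B) (EFin \o X) by exact: integrableS iX.
  have iYC : P.-integrable (A `&` B) (EFin \o Y) by exact: integrableS iY.
  have g0G : X x0 \in G by exact: sG.
  have h0H : Y x0 \in H by exact: sH.
  have [lt|gt] := itv_order D g0G h0H.
    have := key_zero mC iXC iYC eq.
    move=> /(_ _) P0; move: PC; rewrite P0 ?ltxx // => x [Ax Bx].
    by apply: lt; [exact: sG|exact: sH].
  have := key_zero mC iYC iXC (esym eq).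
  move=> /(_ _) P0; move: PC; rewrite P0 ?ltxx // => x [Ax Bx].
  by apply: gt; [exact: sG|exact: sH].
split => // _ [E [mE [cX cY]]]; apply: part1.
exists (\1_E); split => //.
exact: (integrable_indic P mE).
Qed.
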